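(* For every $X \in L^\infty$, the expectation $\mathbb{E}[X]$ is non-empty. Moreover, $\mathbb{E}[X]$ is the smallest closed ball in $\mathbb{K}$ that contains $\mathrm{supp}\, X$ (the closed support of the law of $X$); it is a closed ball of radius $\varepsilon(X)$ (a single point being regarded as a ball of radius $0$).
   Context: $\mathbb{K}$ is a local field (a locally compact, non-discrete, totally disconnected topological field) with non-archimedean absolute value $|\cdot|$ satisfying $|x|=0 \iff x=0$, $|xy|=|x||y|$ and $|x+y|\le |x|\vee|y|$; its nonzero values are the powers $q^k$, $k\in\mathbb{Z}$, for some $q=p^c$ with $p$ prime. $(\Omega,\mathcal{F},\mathbb{P})$ is a probability space and a $\mathbb{K}$-valued random variable is a measurable map into $\mathbb{K}$ with its Borel $\sigma$-field; random variables equal a.s. are identified. $L^\infty$ is the space of $\mathbb{K}$-valued random variables $X$ with $\|X\|_\infty:=\operatorname{ess\,sup}|X|<\infty$. For $X\in L^\infty$, $\varepsilon(X):=\inf\{\|X-c\|_\infty : c\in\mathbb{K}\}$ and the expectation of $X$ is the subset $\mathbb{E}[X]:=\{c\in\mathbb{K} : \|X-c\|_\infty=\varepsilon(X)\}$ of $\mathbb{K}$. *)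

(* Defs.v *)
From HB Require Import structures.
From mathcomp Require Import all_boot all_order all_algebra.
From mathcomp Require Import all_classical all_reals all_analysis.
From mathcomp Require Import ess_sup_inf.
Set Implicit Arguments. Unset Strict Implicit. Unset Printing Implicit Defensive.
Import Order.TTheory GRing.Theory Num.Theory.
Import numFieldNormedType.Exports.
Local Open Scope classical_set_scope.
Local Open Scope ring_scope.

Section LocalFieldDefs.
Context {R : realType} {K : fieldType} (v : K -> R).

Definition cball (a : K) (r : R) : set K := [set x | v (x - a) <= r].
Definition oball (a : K) (r : R) : set K := [set x | v (x - a) < r].

Definition Kopen (U : set K) : Prop :=
  forall x, U x -> exists2 r : R, 0 < r & oball x r `<=` U.

Definition Kcompact (A : set K) : Prop :=
  forall (I : Type) (U : I -> set K), (forall i, Kopen (U i)) ->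
    A `<=` \bigcup_i U i ->
    exists2 F : set I, finite_set F & A `<=` \bigcup_(i in F) U i.

Definition Klocally_compact : Prop :=
  forall x : K, exists2 N : set K, Kcompact N &
    exists2 r : R, 0 < r & oball x r `<=` N.

Definition Knon_discrete : Prop := forall x : K, ~ Kopen [set x].

(* K is a local field whose topology comes from the non-archimedean absolute
   value v, whose nonzero values are exactly the q^k (k : int), q = p^c *)
Definition local_field_abs (q : R) : Prop :=
  [/\ (forall x, v x = 0 <-> x = 0) /\
        (forall x y, v (x * y) = v x * v y),
      forall x y, v (x + y) <= Num.max (v x) (v y),
      (forall r, (exists2 x, x != 0 & v x = r) <-> exists k : int, r = q ^ k),
      (exists p c : nat, [/\ prime p, (0 < c)%N & q = (p ^ c)%:R]) &
      Klocally_compact /\ Knon_discrete].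

Definition Kborel : set (set K) := <<s [set U | Kopen U] >>.

Context {d : measure_display} {Omega : measurableType d}
        (P : probability Omega R).

Definition Krandom_variable (X : Omega -> K) : Prop :=
  forall B, Kborel B -> measurable (X @^-1` B).

Definition Kinfnorm (X : Omega -> K) : \bar R :=
  ess_sup P (fun w => (v (X w))%:E).

Definition KLinf (X : Omega -> K) : Prop :=
  Krandom_variable X /\ (Kinfnorm X < +oo)%E.

Definition Keps (X : Omega -> K) : \bar R :=
  ereal_inf [set Kinfnorm (fun w => X w - c) | c in [set: K]].

Definition Kexpect (X : Omega -> K) : set K :=
  [set c | Kinfnorm (fun w => X w - c) = Keps X].

Definition Ksupp (X : Omega -> K) : set K :=
  [set x | forall U, Kopen U -> U x -> (0 < P (X @^-1` U))%E].

End LocalFieldDefs.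

(* Main.v *)
Require Import Defs.
From HB Require Import structures.
From mathcomp Require Import all_boot all_order all_algebra.
From mathcomp Require Import all_classical all_reals all_analysis.
From mathcomp Require Import ess_sup_inf finmap.
Import Order.TTheory GRing.Theory Num.Theory.
Local Open Scope classical_set_scope.
Local Open Scope ring_scope.
Set Implicit Arguments. Unset Strict Implicit.
Lemma lf_basic (R : realType) (K : fieldType) (v : K -> R) (q : R) :
  local_field_abs v q ->
  [/\ v 0 = 0, (forall x, 0 <= v x), (forall x, v x = 0 -> x = 0),
      (forall x y, v (x * y) = v x * v y) &
      (forall x y, v (x + y) <= Num.max (v x) (v y))].
Proof.
case=> [[v0 vM] vD vq [p [c [pp c0 qE]]] _]; subst q.
have q0 : 0 < ((p ^ c)%:R : R).
  by rewrite ltr0n expn_gt0 prime_gt0.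
split => //; first by apply/v0.
- move=> x; have [->|x0] := eqVneq x 0; first by rewrite (proj2 (v0 0)).
  have [k ->] : exists k : int, v x = (p ^ c)%:R ^ k by apply/vq; exists x.
  by apply/ltW/exprz_gt0.
- by move=> x /v0.
Qed.

Lemma lf_more (R : realType) (K : fieldType) (v : K -> R) (q : R) :
  local_field_abs v q ->
  [/\ v 1 = 1, (forall x, v (- x) = v x),
      (forall x y, v (x - y) = v (y - x)),
      (forall x y z, v (x - z) <= Num.max (v (x - y)) (v (y - z))) &
      (forall x, x != 0 -> v x^-1 = (v x)^-1)].
Proof.
move=> HK; have [v0 vge0 v0E vM vD] := lf_basic HK.
have v1 : v 1 = 1.
  have h : v 1 * v 1 = v 1 * 1 by rewrite -vM mulr1 mulr1.
  apply: (mulfI _ h); apply/eqP => /v0E /eqP; by rewrite oner_eq0.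
have vN : forall x, v (- x) = v x.
  move=> x; rewrite -mulN1r vM.
  suff -> : v (-1) = 1 by rewrite mul1r.
  have h : v (-1) ^+ 2 = 1 ^+ 2 by rewrite expr2 -vM mulrNN mulr1 v1 expr1n.
  by move/eqP: h; rewrite eqrXn2 // => /eqP.
split => //.
- by move=> x y; rewrite -opprB vN.
- move=> x y z; have -> : x - z = (x - y) + (y - z) by rewrite addrA subrK.
  exact: vD.
- move=> x x0; have h : v x * v x^-1 = 1 by rewrite -vM mulfV // v1.
  have vx0 : v x != 0 by apply/eqP => /v0E /eqP; rewrite (negbTE x0).
  by apply: (mulfI vx0); rewrite h mulfV.
Qed.

Lemma lf_big (R : realType) (K : fieldType) (v : K -> R) (q : R) :
  local_field_abs v q -> forall B : R, exists t, t != 0 /\ B < v t.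
Proof.
move=> HK B; have HK' := HK.
case: HK' => [_ _ vq [p [c [pp c0 qE]]] _].
pose n := Num.Def.archi_bound `|B|.
have hB : B < n%:R by apply: le_lt_trans (ler_norm B) (archi_boundP _).
have hq : (n%:R : R) <= q ^+ n.
  rewrite qE -natrX ler_nat; apply: ltnW; apply: ltn_expl.
  rewrite (leq_trans (prime_gt1 pp)) //.
  by rewrite -{1}(expn1 p) leq_pexp2l // prime_gt0.
have [x x0 vx] : exists2 x, x != 0 & v x = q ^ (n%:Z) by apply/vq; exists n.
by exists x; split => //; rewrite vx; apply: lt_le_trans hq.
Qed.

Lemma oball_open (R : realType) (K : fieldType) (v : K -> R) (q : R) :
  local_field_abs v q -> forall a r, Kopen v (oball v a r).
Proof.
move=> HK a r x hx; have [v0 vge0 v0E vM vD] := lf_basic HK.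
have [v1 vN vB ult vV] := lf_more HK.
exists r; first exact: le_lt_trans (vge0 _) hx.
move=> z hz; rewrite /oball /=.
by apply: le_lt_trans (ult z x a) _; rewrite gt_max hz hx.
Qed.

Lemma cball_compact (R : realType) (K : fieldType) (v : K -> R) (q : R) :
  local_field_abs v q -> forall a B, 0 <= B -> Kcompact v (cball v a B).
Proof.
move=> HK a B B0; have [v0 vge0 v0E vM vD] := lf_basic HK.
have [v1 vN vB ult vV] := lf_more HK.
have [[_ _] _ _ _ [lc _]] := HK.
have [N Nc [rho rho0 sub]] := lc a.
have [t [t0 vt]] := lf_big HK (B / rho).
have vt0 : 0 < v t by apply: le_lt_trans vt; apply: divr_ge0 => //; apply: ltW.
move=> I U Uo cov.
pose phi y := a + t * (y - a).
have phiE y : phi y - a = t * (y - a) by rewrite /phi addrAC subrr add0r.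
pose U' (o : option I) := match o with
  | Some i => [set y | U i (phi y)]
  | None => [set y | B < v t * v (y - a)] end.
have U'o : forall o, Kopen v (U' o).
  case=> [i|] y /=.
  - move=> /Uo [s s0 hs]; exists (s / v t); first exact: divr_gt0.
    move=> z /= hz; apply: hs; rewrite /oball /=.
    have -> : phi z - phi y = t * (z - y).
      by rewrite /phi opprD addrACA subrr add0r -mulrBr opprB addrA subrK.
    by rewrite vM -ltr_pdivlMl // mulrC.
  - move=> hy.
    have hy0 : 0 < v (y - a).
      rewrite lt_neqAle vge0 andbT; apply/eqP => h.
      by move: hy; rewrite -h mulr0 ltNge B0.
    exists (v (y - a)) => // z /= hz.
    apply: (lt_le_trans hy); rewrite ler_pM2l //.
    have := ult y z a; rewrite le_max => /orP[|//].
    by rewrite (vB y z) leNgt hz.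
have covN : N `<=` \bigcup_o U' o.
  move=> y Ny; case: (leP (v t * v (y - a)) B) => h.
  - have : cball v a B (phi y) by rewrite /cball /= phiE vM.
    by move=> /cov [i _ hi]; exists (Some i).
  - by exists None.
have [G Gfin GN] := Nc _ U' U'o covN.
exists (Some @^-1` G).
  by apply: finite_preimage => // i j _ _ [].
move=> z hz; rewrite /cball /= in hz.
pose y := a + t^-1 * (z - a).
have phiy : phi y = z.
  by rewrite /phi /y addrAC subrr add0r mulVKf // addrC subrK.
have yN : N y.
  apply: sub; rewrite /oball /= /y addrAC subrr add0r vM vV //.
  apply: le_lt_trans (_ : (v t)^-1 * B < rho).
    by rewrite ler_pM2l // invr_gt0.
  by rewrite ltr_pdivrMl // -ltr_pdivrMr // mulrC.
have [[i|] Go hU] := GN y yN.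
- by exists i => //=; rewrite -phiy.
- move: hU; rewrite /= -vM -phiE phiy ltNge hz //.
Qed.


Lemma le_maxE (R : realType) (a b c : R) (e : \bar R) :
  c <= Num.max a b -> (a%:E <= e)%E -> (b%:E <= e)%E -> (c%:E <= e)%E.
Proof.
rewrite le_max => /orP[h|h] ha hb.
- by apply: le_trans ha; rewrite lee_fin.
- by apply: le_trans hb; rewrite lee_fin.
Qed.

Unset Implicit Arguments. Set Strict Implicit.
Theorem mainTheorem1 (R : realType) (K : fieldType) (v : K -> R) (q : R)
  (HK : local_field_abs v q)
  (d : measure_display) (Omega : measurableType d) (P : probability Omega R)
  (X : Omega -> K) (HX : KLinf v P X) :
  Kexpect v P X !=set0 /\
  (exists a : K, Kexpect v P X = cball v a (fine (Keps v P X))) /\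
  Ksupp v P X `<=` Kexpect v P X /\
  (forall (a : K) (r : R), 0 <= r -> Ksupp v P X `<=` cball v a r ->
     Kexpect v P X `<=` cball v a r).
Proof.
have [v0 vge0 v0E vM vD] := lf_basic HK.
have [v1 vN vB ult vV] := lf_more HK.
move: HX => [Xrv Xfin].
have PT : (0 < P setT)%E by rewrite probability_setT lte01.
have aeF := @ae_properfilter_algebraOfSetsType _ _ _ P PT.
have pick : forall Q : Omega -> Prop, (\forall w \ae P, Q w) -> exists w, Q w.
  by move=> Q hQ; apply: filter_ex hQ.
pose F c := Kinfnorm v P (fun w => X w - c).
have Fge c : \forall w \ae P, ((v (X w - c))%:E <= F c)%E.
  exact: ess_sup_ge.
have Fle c (e : \bar R) : (\forall w \ae P, ((v (X w - c))%:E <= e)%E) ->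
    (F c <= e)%E.
  by move=> h; apply/ess_supP.
have KX0 : (0 <= Kinfnorm v P X)%E.
  by apply: ess_sup_gee => //; apply: nearW => w; rewrite lee_fin.
pose M := fine (Kinfnorm v P X).
have KXE : Kinfnorm v P X = M%:E by rewrite fineK // ge0_fin_numE.
have aeS : forall (A B : Omega -> Prop), (forall w, A w -> B w) ->
    (\forall w \ae P, A w) -> (\forall w \ae P, B w).
  by move=> A B AB hA; apply: (@filterS _ _ (ae_filter_ringOfSetsType P) A B AB hA).
have aeI : forall (A B : Omega -> Prop),
    (\forall w \ae P, A w) -> (\forall w \ae P, B w) ->
    (\forall w \ae P, A w /\ B w).
  by move=> A B hA hB; apply: (@filterI _ _ (ae_filter_ringOfSetsType P) A B hA hB).
have aeM : \forall w \ae P, v (X w) <= M.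
  apply: aeS (ess_sup_ge P (fun w => (v (X w))%:E)) => w.
  by rewrite -/(Kinfnorm v P X) KXE lee_fin.
have Fbd c : (F c <= (Num.max M (v c))%:E)%E.
  apply: Fle; apply: aeS aeM => w h; rewrite lee_fin.
  apply: le_trans (vD _ _) _; rewrite vN.
  by rewrite ge_max !le_max h lexx orbT.
have F0 c : (0 <= F c)%E.
  by apply: ess_sup_gee => //; apply: nearW => w; rewrite lee_fin.
have Ffin c : F c = (fine (F c))%:E.
  by rewrite fineK // ge0_fin_numE // (le_lt_trans (Fbd c)) // ltry.
pose eps := Keps v P X.
have epsF c : (eps <= F c)%E by apply: ereal_inf_lbound; exists c.
have eps0 : (0 <= eps)%E by apply: le_ereal_inf_tmp => y [c _ <-]; exact: F0.
have epsE : eps = (fine eps)%:E.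
  rewrite fineK // ge0_fin_numE //; apply: le_lt_trans (epsF 0) _.
  by rewrite Ffin ltry.
pose r0 := fine eps.
have r00 : 0 <= r0 by apply: fine_ge0.
have Sne : [set F c | c in [set: K]] != set0.
  by apply/set0P; exists (F 0); exists 0.
have [u Su cvu] := ereal_inf_seq Sne.
have /choice [cs hcs] : forall n, exists c, F c = u n.
  by move=> n; have [c _ h] := Su n; exists c.
have aeall := @ae_foralln _ _ _ P (fun n w => ((v (X w - cs n))%:E <= F (cs n))%E)
   (fun n => Fge (cs n)).
have [w0 hw0] := pick _ aeall.
pose c0 := X w0.
have Fc0u n : (F c0 <= u n)%E.
  rewrite -hcs; apply: Fle; apply: aeS (Fge (cs n)) => w h.
  apply: le_maxE (ult (X w) (cs n) c0) h _.
  by rewrite (vB (cs n) c0); exact: hw0.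
have Fc0 : F c0 = eps.
  apply/le_anti; rewrite epsF andbT.
  rewrite (_ : eps = ereal_inf (range F)) // -(cvg_lim _ cvu) //; apply: lime_ge; first by apply/cvgP: cvu.
  by apply: nearW.
have Echar c : Kexpect v P X c <-> v (c - c0) <= r0.
  split.
  - move=> hc; have hc' : F c = eps := hc.
    have [w [h1 h2]] := pick _ (aeI _ _ (Fge c) (Fge c0)).
    rewrite hc' epsE lee_fin in h1; rewrite Fc0 epsE lee_fin in h2.
    apply: le_trans (ult c (X w) c0) _.
    by rewrite ge_max (vB c (X w)) h1 h2.
  - move=> h; change (F c = eps).
    apply/le_anti; rewrite epsF andbT epsE.
    apply: Fle; apply: aeS (Fge c0) => w h'.
    apply: le_maxE (ult (X w) c0 c) _ _; first by rewrite -epsE -Fc0.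
    by rewrite lee_fin (vB c0 c).
split; first by exists c0; apply/Echar; rewrite subrr v0.
split; first by exists c0; apply/seteqP; split => c /Echar.
split.
  move=> x hx; apply/Echar; rewrite leNgt; apply/negP => hlt.
  have U0 : oball v x (v (x - c0)) x.
    by rewrite /oball /= subrr v0 (le_lt_trans r00 hlt).
  have mU : measurable (X @^-1` oball v x (v (x - c0))).
    by apply: Xrv; apply: sub_gen_smallest; exact: (@oball_open _ _ _ _ HK x (v (x - c0))).
  have := hx _ (@oball_open _ _ _ _ HK x (v (x - c0))) U0.
  have [N [mN PN sN]] := Fge c0.
  rewrite (subset_measure0 mU mN _ PN) ?ltxx //.
  move=> w /= hw; apply: sN => /=.
  rewrite Fc0 epsE lee_fin => h.
  have := ult x (X w) c0; rewrite le_max => /orP[].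
  - by rewrite (vB x (X w)) leNgt hw.
  - move=> h'; have := le_trans h' h; rewrite leNgt hlt //.
move=> a r rge0 sub.
pose B := Num.max M (v a).
have B0 : 0 <= B by rewrite le_max vge0 orbT.
have aeB : \forall w \ae P, v (X w - a) <= B.
  apply: aeS aeM => w h; apply: le_trans (vD _ _) _.
  by rewrite vN ge_max !le_max h lexx orbT.
have key : forall n : nat, \forall w \ae P,
    ~ (r + n.+1%:R^-1 <= v (X w - a) /\ v (X w - a) <= B).
  move=> n; pose del : R := n.+1%:R^-1.
  have del0 : 0 < del by rewrite invr_gt0 ltr0n.
  have /choice [G0 hG0] : forall y : K, exists U : set K,
      [/\ Kopen v U, P (X @^-1` U) = 0%E & (Ksupp v P X y \/ U y)].
    move=> y; case: (pselect (Ksupp v P X y)) => hy.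
    - exists set0; split => //; last by left.
      all: try by move=> z [].
      have -> : X @^-1` set0 = set0 :> set Omega by apply/seteqP; split => w.
      exact: measure0.
    - move: hy => /existsNP [U /not_implyP [Uo /not_implyP [Uy hP]]].
      exists U; split => //; last by right.
      apply/eqP; rewrite eq_le measure_ge0 andbT leNgt; exact/negP.
  pose U' (o : option K) := match o with
    | Some y => G0 y | None => oball v a (r + del) end.
  have U'o o : Kopen v (U' o).
    case: o => [y|] /=; first by case: (hG0 y).
    exact: (@oball_open _ _ _ _ HK a (r + del)).
  have cov : cball v a B `<=` \bigcup_o U' o.
    move=> z hz; case: (pselect (Ksupp v P X z)) => hz'.
    - exists None => //=; rewrite /oball /=.
      by apply: le_lt_trans (sub _ hz') _; rewrite ltrDl.
    - by exists (Some z) => //=; case: (hG0 z) => _ _ [].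
  have hcomp := @cball_compact _ _ _ _ HK a B B0.
  have [G Gfin Gcov] := hcomp (option K) U' U'o cov.
  have [Gs GE] := finite_fsetP.1 Gfin.
  pose f (o : option K) : set Omega := match o with
    | None => setT | Some y => [set w | ~ G0 y (X w)] end.
  have aeG := @filter_bigI Omega (option K) Gs f (almost_everywhere P)
    (ae_filter_ringOfSetsType P).
  have aeG' : forall i, i \in Gs -> almost_everywhere P (f i).
    move=> [y|] _ /=; last exact: filterT.
    case: (hG0 y) => Uo PU _.
    exists (X @^-1` G0 y); split => //.
    - by apply: Xrv; apply: sub_gen_smallest.
    - by move=> w /= /contrapT.
  have aeG2 := aeG aeG'.
  apply: aeS aeG2 => w hw [h1 h2].
  have [j Go hU] := Gcov (X w) h2.
  rewrite GE in Go.
  case: j Go hU => [y|] Go hU.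
  - by have := hw (Some y) Go; apply.
  - by move: hU; rewrite /U' /oball /= ltNge h1.
have aeK := @ae_foralln _ _ _ P (fun n w =>
   ~ (r + n.+1%:R^-1 <= v (X w - a) /\ v (X w - a) <= B)) key.
have aeA : \forall w \ae P, v (X w - a) <= r.
  apply: aeS (aeI _ _ aeK aeB) => w [hK hB].
  rewrite leNgt; apply/negP => hlt.
  have hpos : 0 < v (X w - a) - r by rewrite subr_gt0.
  pose n := Num.Def.archi_bound ((v (X w - a) - r)^-1).
  apply: (hK n); split => //.
  rewrite -lerBrDl; apply: ltW.
  rewrite invf_plt ?posrE ?ltr0n //.
  apply: lt_trans (archi_boundP _) _; first by rewrite invr_ge0 ltW.
  by rewrite ltr_nat.
have Fa : (F a <= r%:E)%E by apply: Fle; apply: aeS aeA => w; rewrite lee_fin.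
have r0r : r0 <= r by rewrite -lee_fin -epsE (le_trans (epsF a) Fa).
move=> c /Echar hc; rewrite /cball /=.
have [w [h1 h2]] := pick _ (aeI _ _ aeA (Fge c0)).
apply: le_trans (ult c (X w) a) _; rewrite ge_max h1 andbT.
apply: le_trans (ult c c0 (X w)) _; rewrite ge_max (vB c0 (X w)).
rewrite Fc0 epsE lee_fin in h2.
by rewrite (le_trans hc r0r) (le_trans h2 r0r).
Qed.
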